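(* Let $\{\nu_k\}_{k\ge0}$ be a sparse sequence of stopping times and define $S_m:=\bigcup_{k\ge0}\{\nu_k=m\}$ for $m\ge0$. Then $\{S_m\}_{m\ge0}$ is sparse.
   Context: $(\Omega,\mathcal{F},\mu)$ is a probability space with filtration $\{\mathcal{F}_k\}_{k\ge0}$, $\mathsf{E}_k=\mathsf{E}[\cdot|\mathcal{F}_k]$. An increasing sequence of stopping times $\{\nu_k\}_{k\ge0}$ is called sparse if, with $E_k=\{\nu_k<\infty\}$, for every $k$ and every $A\subseteq E_k$ with $A\in\mathcal{F}_{\nu_k}$ we have $\mu(A\cap E_{k+1})\le\frac12\mu(A)$. An adapted sequence of sets $\{S_k\}_{k\ge0}$ ($S_k\in\mathcal{F}_k$) is $\eta$-sparse if for every $k\ge0$ and every $\mathcal{F}_k$-measurable $A\subseteq S_k$, $\mu(A\setminus\bigcup_{m\ge k+1}S_m)\ge\eta\mu(A)$; ''sparse'' means $\frac12$-sparse. *)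

(* Defs.v *)
From mathcomp Require Import all_boot all_order all_algebra.
From mathcomp Require Import all_classical all_reals all_analysis.
Set Implicit Arguments. Unset Strict Implicit. Unset Printing Implicit Defensive.
Import Order.TTheory GRing.Theory Num.Theory.
Local Open Scope classical_set_scope.
Local Open Scope ring_scope.

(* Discrete time with infinity: [None] stands for +oo. *)
Definition leoi (a b : option nat) : bool :=
  match a, b with
  | _, None => true
  | None, Some _ => false
  | Some x, Some y => (x <= y)%N
  end.

Section defs.
Context {d : measure_display} {T : measurableType d}.

Definition filtration (F : nat -> set (set T)) : Prop :=
  [/\ forall n, sigma_algebra setT (F n),
      forall n, F n `<=` measurable &
      forall n, F n `<=` F n.+1].

Definition stopping_time (F : nat -> set (set T)) (tau : T -> option nat) :=
  forall n : nat, F n [set x | leoi (tau x) (Some n)].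

Definition stopped_sigma (F : nat -> set (set T)) (tau : T -> option nat)
  : set (set T) :=
  [set A | measurable A /\
     forall n : nat, F n (A `&` [set x | leoi (tau x) (Some n)])].

Context {R : realType}.

Definition sparse_stopping_times (P : probability T R)
  (F : nat -> set (set T)) (nu : nat -> T -> option nat) : Prop :=
  [/\ forall k, stopping_time F (nu k),
      forall k x, leoi (nu k x) (nu k.+1 x) &
      forall k (A : set T),
        A `<=` [set x | nu k x != None] -> stopped_sigma F (nu k) A ->
        (P (A `&` [set x | nu k.+1 x != None]) <= (2^-1)%:E * P A)%E].

Definition eta_sparse_sets (P : probability T R) (F : nat -> set (set T))
  (eta : R) (S : nat -> set T) : Prop :=
  (forall k, F k (S k)) /\
  forall k (A : set T), F k A -> A `<=` S k ->
    (eta%:E * P A <= P (A `\` \bigcup_(m in [set m | (k.+1 <= m)%N]) S m))%E.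

End defs.

(* Main.v *)
Require Import Defs.
From mathcomp Require Import all_boot all_order all_algebra.
From mathcomp Require Import all_classical all_reals all_analysis.
From mathcomp Require Import lra.
Local Open Scope classical_set_scope.
Local Open Scope ring_scope.
Import Order.TTheory GRing.Theory Num.Theory.

Section helpers.
Variables (T : Type) (G : set (set T)).
Hypothesis sG : sigma_algebra setT G.

Lemma sa0 : G set0. Proof. by case: sG. Qed.
Lemma saC A : G A -> G (~` A).
Proof. by case: sG => _ h _ /h; rewrite setTD. Qed.
Lemma saT : G setT.
Proof. by rewrite -setC0; apply: saC; exact: sa0. Qed.
Lemma saU A B : G A -> G B -> G (A `|` B).
Proof.
move=> hA hB; case: sG => _ _ h.
have -> : A `|` B = \bigcup_k (fun n => if n is 0 then A else B) k.
  apply/seteqP; split => x.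
    by case=> hx; [exists 0%N | exists 1%N].
  by case=> -[|n] _ hx; [left|right].
by apply: h => -[|n].
Qed.
Lemma saI A B : G A -> G B -> G (A `&` B).
Proof.
move=> hA hB; rewrite -(setCK (A `&` B)) setCI.
by apply: saC; apply: saU; apply: saC.
Qed.
Lemma saD A B : G A -> G B -> G (A `\` B).
Proof. by move=> hA hB; rewrite setDE; apply: saI => //; apply: saC. Qed.
End helpers.
Arguments sa0 {T G}. Arguments saC {T G}. Arguments saT {T G}.
Arguments saU {T G}. Arguments saI {T G}. Arguments saD {T G}.

Lemma leoi_trans a b c : leoi a b -> leoi b c -> leoi a c.
Proof.
by case: a => [a|]; case: b => [b|]; case: c => [c|] //=; apply: leq_trans.
Qed.

Theorem lemma1p3 (d : measure_display) (T : measurableType d) (R : realType)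
  (P : probability T R) (F : nat -> set (set T))
  (nu : nat -> T -> option nat) :
  filtration F ->
  sparse_stopping_times P F nu ->
  eta_sparse_sets P F (2^-1)
    (fun m => \bigcup_k [set x | nu k x = Some m]).
Proof.
move=> [sF mF iF] [st mono sp].
have Fmono : forall n i, F n `<=` F (n + i)%N.
  move=> n; elim=> [|i IH]; first by rewrite addn0.
  by move=> A /IH; rewrite addnS; apply: iF.
have Fle : forall n n', (n <= n')%N -> F n `<=` F n'.
  by move=> n n' /subnKC <-; apply: Fmono.
have hEq : forall j m, F m [set x | nu j x = Some m].
  move=> j [|m].
    have -> : [set x | nu j x = Some 0%N] = [set x | leoi (nu j x) (Some 0%N)].
      by apply/seteqP; split => x /=; case: (nu j x) => [[|a]|].
    exact: st.
  have -> : [set x | nu j x = Some m.+1] =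
     [set x | leoi (nu j x) (Some m.+1)] `\` [set x | leoi (nu j x) (Some m)].
    apply/seteqP; split => x /=; case: (nu j x) => [a|] //=; last by case.
      by case=> ->; rewrite ltnn.
    by case=> h1 /negP; rewrite -ltnNge => h2; congr Some; apply/eqP; rewrite eqn_leq h1.
  apply: (saD (sF _)); first exact: st.
  by apply: (Fle m); [exact: leqnSn | exact: st].
have hmono : forall i j x, (i <= j)%N -> leoi (nu i x) (nu j x).
  move=> i j x /subnKC <-; elim: (j - i)%N => [|k IH].
    by rewrite addn0; case: (nu i x) => //= ?.
  by rewrite addnS; apply: leoi_trans IH (mono _ _).
split.
  move=> k; case: (sF k) => _ _ h; apply: h => n; exact: hEq.
move=> m A FA AS.
set U := \bigcup_(j in _) _.
pose B k := A `&` [set x | nu k x = Some m /\ forall j, (j < k)%N -> nu j x <> Some m].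
have hFB : forall k, F m (B k).
  move=> k; rewrite /B.
  have -> : [set x | nu k x = Some m /\ forall j, (j < k)%N -> nu j x <> Some m]
    = [set x | nu k x = Some m] `&` [set x | forall j, (j < k)%N -> nu j x <> Some m].
    by [].
  apply: (saI (sF m)) => //; apply: (saI (sF m)) => //.
  elim: k => [|k IH].
    have -> : [set x | forall j, (j < 0)%N -> nu j x <> Some m] = setT.
      by apply/seteqP; split => x //=.
    exact: saT.
  have -> : [set x | forall j, (j < k.+1)%N -> nu j x <> Some m] =
     [set x | forall j, (j < k)%N -> nu j x <> Some m] `&` ~` [set x | nu k x = Some m].
    apply/seteqP; split => x /=.
      by move=> h; split => [j hj|]; apply: h => //; apply: ltnW.
    move=> [h1 h2] j; rewrite ltnS leq_eqVlt => /orP [/eqP ->|]; first exact: h2.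
    exact: h1.
  by apply: (saI (sF m)) => //; apply: (saC (sF m)).
have hmB : forall k, measurable (B k) by move=> k; apply: mF (hFB k).
have htriv : trivIset setT B.
  move=> i j _ _ [x [[_ [hi Hi]] [_ [hj Hj]]]].
  case: (ltngtP i j) => // h.
    by case: (Hj i h).
  by case: (Hi j h).
have hcov : A = \bigcup_k B k.
  apply/seteqP; split => x; last by case=> k _ [].
  move=> Ax; case: (AS x Ax) => k _ hk.
  have exP : exists n, nu n x == Some m by exists k; apply/eqP.
  case: (ex_minnP exP) => n /eqP hn hmin.
  exists n => //; split => //; split => // j hj hj'.
  have := hmin j (introT eqP hj'); rewrite leqNgt hj //.
have mS : forall j, measurable (\bigcup_k [set x | nu k x = Some j]).
  move=> j; apply: (mF j); case: (sF j) => _ _ h; apply: h => n; exact: hEq.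
have mU : measurable U by apply: bigcup_measurable => j _; exact: mS.
have mA : measurable A by exact: mF FA.
have hsubU : forall k, B k `&` U `<=` B k `&` [set x | nu k.+1 x != None].
  move=> k x [[Ax [hk Hk]] [j /= hj [k' _ hk']]]; split => //=.
  case: (leqP k' k) => h.
    by have := hmono k' k x h; rewrite hk hk' /= leqNgt hj.
  have := hmono k.+1 k' x h; rewrite hk'; by case: (nu k.+1 x).
have hstop : forall k, stopped_sigma F (nu k) (B k).
  move=> k; split; first exact: hmB.
  move=> n; case: (leqP m n) => h.
    have -> : B k `&` [set x | leoi (nu k x) (Some n)] = B k.
      apply/seteqP; split => x; first by case.
      move=> hx; split => //; case: hx => _ [hk _] /=; by rewrite hk.
    exact: (Fle m n h).
  have -> : B k `&` [set x | leoi (nu k x) (Some n)] = set0.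
    apply/seteqP; split => x //= [[_ [hk _]]].
    by rewrite hk /= leqNgt h.
  exact: sa0 (sF n).
have hle : (P (A `&` U) <= (2^-1)%:E * P A)%E.
  rewrite {1}hcov setI_bigcupl measure_bigcup; last first.
  - exact: trivIset_setIr.
  - by move=> i _; apply: measurableI.
  rewrite {1}hcov measure_bigcup // -nneseriesZl; last by move=> *; exact: measure_ge0.
  apply: lee_nneseries; first by move=> *; exact: measure_ge0.
  move=> n _.
  apply: le_trans (sp n (B n) _ (hstop n)).
    apply: le_measure; rewrite ?inE; [exact: measurableI|  |exact: hsubU].
    apply: measurableI => //.
    have -> : [set x | nu n.+1 x != None] =
      \bigcup_j [set x | leoi (nu n.+1 x) (Some j)].
      apply/seteqP; split => x /=.
        case E: (nu n.+1 x) => [a|] // _.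
        by exists a => //=; rewrite E /=.
      by case=> j _ /=; case: (nu n.+1 x).
    apply: bigcup_measurable => j _; apply: (mF j); exact: st.
  by move=> x [_ [hk _]] /=; rewrite hk.
have hA1 := probability_le1 P mA.
have hA0 := measure_ge0 P A.
have hB0 := measure_ge0 P (A `&` U).
have fA : P A \is a fin_num by rewrite ge0_fin_numE //; apply: le_lt_trans hA1 _; exact: ltey.
have fB : P (A `&` U) \is a fin_num.
  rewrite ge0_fin_numE //; apply: le_lt_trans hle _.
  by rewrite -(fineK fA) -EFinM ltey.
have key : ((2^-1)%:E * P A <= P A - P (A `&` U))%E.
  rewrite -(fineK fA) -(fineK fB) in hle hA0 hB0 *.
  rewrite -EFinM in hle; rewrite -EFinM -EFinB !lee_fin; rewrite !lee_fin in hle hA0 hB0.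
  lra.
rewrite measureD //; last by apply: le_lt_trans hA1 _; exact: ltey.
Qed.
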